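(* Let $\mathbf M=(M,\vee,(\sqsubseteq^n)_{n\ge 1})$ be a multi-argument specialization semilattice. Then there exist a set $X$ and a closure operation $K$ on $\mathcal P(X)$ such that $\mathbf M$ embeds into the multi-argument specialization semilattice $(\mathcal P(X),\cup,(\sqsubseteq^n)_{n\ge1})$ associated to the closure space $(X,K)$, where $a\sqsubseteq^n b_1,\dots,b_n$ holds iff $a\subseteq Kb_1\cup\dots\cup Kb_n$. That is, there is an injective map $\varphi:M\to\mathcal P(X)$ with $\varphi(a\vee b)=\varphi(a)\cup\varphi(b)$ for all $a,b\in M$, and for all $n\ge1$ and $a,b_1,\dots,b_n\in M$: $a\sqsubseteq^n b_1,\dots,b_n$ in $\mathbf M$ if and only if $\varphi(a)\subseteq K\varphi(b_1)\cup\dots\cup K\varphi(b_n)$.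
   Context: A multi-argument specialization semilattice is a join semilattice $(M,\vee)$ (with order $a\le b$ iff $a\vee b=b$) together with, for each $n\ge1$, an $(n+1)$-ary relation written $a\sqsubseteq^n b_1,\dots,b_n$ (or $a\sqsubseteq b_1,\dots,b_n$), such that for all elements: (M1) $a\sqsubseteq a$; (M2) if $a\sqsubseteq b_1,b_2,\dots,b_n$ and $b_1\sqsubseteq c$ then $a\sqsubseteq c,b_2,\dots,b_n$; (M3) if $a\le b$ and $b\sqsubseteq c_1,\dots,c_m$ then $a\sqsubseteq c_1,\dots,c_m$; (M4) if $a\sqsubseteq b_1,\dots,b_n$ then $a\sqsubseteq b_{\sigma1},\dots,b_{\sigma n}$ for every permutation $\sigma$ of $\{1,\dots,n\}$; (M5) if $a\sqsubseteq b_1,\dots,b_n,b_n$ then $a\sqsubseteq b_1,\dots,b_n$; (M6) if $a\sqsubseteq b_1,\dots,b_n$ then $a\sqsubseteq b_1,\dots,b_n,b_{n+1}$; (M7) if $a\sqsubseteq b_1,\dots,b_n$ and $a_1\sqsubseteq b_1,\dots,b_n$ then $a\vee a_1\sqsubseteq b_1,\dots,b_n$. A closure operation $K$ on $\mathcal P(X)$ is extensive ($x\subseteq Kx$), idempotent ($KKx=Kx$) and isotone ($x\subseteq y\Rightarrow Kx\subseteq Ky$). *)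

(* Defs.v *)
From Stdlib Require Import List Permutation.
Import ListNotations.

Definition subset {X : Type} (A B : X -> Prop) : Prop := forall x, A x -> B x.
Definition union {X : Type} (A B : X -> Prop) : X -> Prop := fun x => A x \/ B x.
Definition empty {X : Type} : X -> Prop := fun _ => False.

Definition is_closure {X : Type} (K : (X -> Prop) -> (X -> Prop)) : Prop :=
  (forall A, subset A (K A)) /\
  (forall A, K (K A) = K A) /\
  (forall A B, subset A B -> subset (K A) (K B)).

Definition is_join_semilattice {M : Type} (join : M -> M -> M) : Prop :=
  (forall a b c, join a (join b c) = join (join a b) c) /\
  (forall a b, join a b = join b a) /\
  (forall a, join a a = a).

Definition sl_le {M : Type} (join : M -> M -> M) (a b : M) : Prop := join a b = b.

(* The multi-argument relation a ⊑^n b_1,...,b_n is encoded as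
   spec a [b_1; ...; b_n], meaningful only for nonempty lists (n = length >= 1). *)
Definition is_mss {M : Type} (join : M -> M -> M) (spec : M -> list M -> Prop) : Prop :=
  is_join_semilattice join /\
  (forall a, spec a [a]) /\
  (forall a b1 bs c, spec a (b1 :: bs) -> spec b1 [c] -> spec a (c :: bs)) /\
  (forall a b cs, cs <> [] -> sl_le join a b -> spec b cs -> spec a cs) /\
  (forall a bs bs', bs <> [] -> Permutation bs bs' -> spec a bs -> spec a bs') /\
  (forall a bs b, spec a (bs ++ [b; b]) -> spec a (bs ++ [b])) /\
  (forall a bs c, bs <> [] -> spec a bs -> spec a (bs ++ [c])) /\
  (forall a a1 bs, bs <> [] -> spec a bs -> spec a1 bs -> spec (join a a1) bs).

Definition union_K {X M : Type} (K : (X -> Prop) -> (X -> Prop)) (phi : M -> X -> Prop)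
  (bs : list M) : X -> Prop :=
  fold_right (fun b acc => union (K (phi b)) acc) empty bs.

(* Main.v *)
Require Import Defs.
From Stdlib Require Import List Permutation.
From Stdlib Require Import Classical FunctionalExtensionality PropExtensionality.
Import ListNotations.

Definition phiF {M : Type} (join : M -> M -> M) (spec : M -> list M -> Prop)
  (a : M) (p : M + (M * list M)) : Prop :=
  match p with inl y => ~ join a y = y | inr (b, l) => ~ spec a (b :: l) end.

Definition inE {M : Type} (spec : M -> list M -> Prop) (p : M + (M * list M)) (c : M) : Prop :=
  match p with inl _ => False | inr (b, l) => exists d, In d (b :: l) /\ spec c [d] end.

Definition KF {M : Type} (spec : M -> list M -> Prop) (Y : M + (M * list M) -> Prop) :
  M + (M * list M) -> Prop :=
  fun p => forall c, (forall q, Y q -> ~ inE spec q c) -> ~ inE spec p c.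

Lemma weaken_app {M : Type} (join : M -> M -> M) (spec : M -> list M -> Prop) :
  is_mss join spec -> forall a ds L, ds <> [] -> spec a ds -> spec a (ds ++ L).
Proof.
  intros (_ & _ & _ & _ & _ & _ & M6 & _) a ds L Hne Hs.
  induction L as [|c l IH] using rev_ind.
  - now rewrite app_nil_r.
  - rewrite app_assoc. apply M6; auto.
    intro E. apply app_eq_nil in E. tauto.
Qed.

Lemma contract {M : Type} (join : M -> M -> M) (spec : M -> list M -> Prop) :
  is_mss join spec -> forall a x L, In x L -> spec a (x :: L) -> spec a L.
Proof.
  intros HM a x L Hin Hs.
  pose proof HM as (_ & _ & _ & _ & M4 & M5 & _ & _).
  destruct (in_split _ _ Hin) as (l1 & l2 & ->).
  assert (P : Permutation (x :: l1 ++ x :: l2) ((l1 ++ l2) ++ [x; x])).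
  { rewrite <- Permutation_middle.
    change (x :: x :: l1 ++ l2) with ([x; x] ++ (l1 ++ l2)).
    apply Permutation_app_comm. }
  apply M4 with (bs := (l1 ++ l2) ++ [x]).
  - intro E. apply app_eq_nil in E. destruct E; discriminate.
  - rewrite <- app_assoc. simpl. apply Permutation_app_head.
    apply Permutation_sym, Permutation_cons_append.
  - apply M5. apply M4 with (bs := x :: l1 ++ x :: l2); auto. discriminate.
Qed.

Lemma contract_all {M : Type} (join : M -> M -> M) (spec : M -> list M -> Prop) :
  is_mss join spec -> forall a L ds, incl ds L -> spec a (ds ++ L) -> spec a L.
Proof.
  intros HM a L ds. induction ds as [|d ds IH]; simpl; intros Hi Hs; auto.
  apply IH. { intros y Hy; apply Hi; simpl; auto. }
  apply (contract join spec HM a d); auto.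
  apply in_or_app; right; apply Hi; simpl; auto.
Qed.

Lemma sub_spec {M : Type} (join : M -> M -> M) (spec : M -> list M -> Prop) :
  is_mss join spec -> forall a L ds, ds <> [] -> incl ds L -> spec a ds -> spec a L.
Proof.
  intros HM a L ds Hne Hi Hs.
  apply (contract_all join spec HM a L ds Hi).
  apply (weaken_app join spec HM); auto.
Qed.

Lemma multicut {M : Type} (join : M -> M -> M) (spec : M -> list M -> Prop) :
  is_mss join spec -> forall a L bs ds,
    (forall b, In b bs -> exists d, In d L /\ spec b [d]) -> incl ds L ->
    bs ++ ds <> [] -> spec a (bs ++ ds) -> spec a L.
Proof.
  intros HM a L bs. pose proof HM as (_ & _ & M2 & _ & M4 & _).
  induction bs as [|b bs IH]; simpl; intros ds Hb Hi Hne Hs.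
  - eapply sub_spec; eauto.
  - destruct (Hb b (or_introl eq_refl)) as (d & Hd & Hbd).
    apply IH with (ds := d :: ds).
    + intros; apply Hb; auto.
    + intros y [<-|Hy]; auto.
    + intro E. apply app_eq_nil in E. destruct E; discriminate.
    + apply M4 with (bs := d :: bs ++ ds).
      * discriminate.
      * apply Permutation_middle.
      * eapply M2; eauto.
Qed.

Lemma union_K_iff {X M : Type} (K : (X -> Prop) -> (X -> Prop)) (phi : M -> X -> Prop) bs p :
  union_K K phi bs p <-> exists b, In b bs /\ K (phi b) p.
Proof.
  induction bs as [|b bs IH]; simpl.
  - split. intros []. intros (b & [] & _).
  - unfold union. rewrite IH. split.
    + intros [H|(c & Hc & Hk)]; eauto.
    + intros (c & [<-|Hc] & Hk); eauto.
Qed.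

Lemma KF_phi {M : Type} (join : M -> M -> M) (spec : M -> list M -> Prop) :
  is_mss join spec -> forall b p, KF spec (phiF join spec b) p <-> ~ inE spec p b.
Proof.
  intros HM b p. pose proof HM as (_ & M1 & M2 & _).
  split.
  - intros Hk. apply Hk.
    intros [y|[b0 l]]; simpl; auto.
    intros Hn (d & Hd & Hbd). apply Hn.
    apply (sub_spec join spec HM b _ [d]); auto. discriminate.
    intros z [<-|[]]; auto.
  - intros Hn c Hsub Hc. apply Hn.
    assert (Hbc : spec b [c]).
    { apply NNPP. intro Hnot. apply (Hsub (inr (c, []))); simpl; auto.
      exists c; split; auto. }
    destruct p as [y|[b0 l]]; simpl in *; [contradiction|].
    destruct Hc as (d & Hd & Hcd). exists d; split; auto.
    eapply M2; eauto.
Qed.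

Theorem corollary5p2 (M : Type) (join : M -> M -> M) (spec : M -> list M -> Prop) :
  is_mss join spec ->
  exists (X : Type) (K : (X -> Prop) -> (X -> Prop)) (phi : M -> X -> Prop),
    is_closure K /\
    (forall a b, phi a = phi b -> a = b) /\
    (forall a b, phi (join a b) = union (phi a) (phi b)) /\
    (forall a bs, bs <> [] -> (spec a bs <-> subset (phi a) (union_K K phi bs))).
Proof.
  intros HM.
  pose proof HM as ((Hass & Hcom & Hid) & M1 & M2 & M3 & M4 & M5 & M6 & M7).
  exists (M + (M * list M))%type, (KF spec), (phiF join spec).
  split; [|split; [|split]].
  - split; [|split].
    + intros Y p Hp c Hc. apply Hc; auto.
    + intros Y. apply functional_extensionality; intro p.
      apply propositional_extensionality. split.
      * intros Hp c Hc. apply Hp. intros q Hq. apply Hq. auto.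
      * intros Hp c Hc. apply Hc. auto.
    + intros A B Hab p Hp c Hc. apply Hp. intros q Hq. apply Hc, Hab; auto.
  - intros a b H.
    pose proof (f_equal (fun f => f (inl b)) H) as H1.
    pose proof (f_equal (fun f => f (inl a)) H) as H2.
    simpl in H1, H2.
    assert (E1 : join a b = b).
    { apply NNPP. intro N. assert (~ join b b = b) by (rewrite <- H1; auto). auto. }
    assert (E2 : join b a = a).
    { apply NNPP. intro N. assert (~ join a a = a) by (rewrite H2; auto). auto. }
    rewrite <- E2, Hcom. auto.
  - intros a b. apply functional_extensionality; intros [y|[b0 l]];
      apply propositional_extensionality; unfold union; simpl.
    + split.
      * intros N. apply NNPP. intro N2. apply N.
        apply not_or_and in N2. destruct N2 as [N1 N3].
        apply NNPP in N1. apply NNPP in N3.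
        rewrite <- Hass, N3. auto.
      * intros [N|N] E; apply N.
        -- rewrite <- E at 1. rewrite Hass, Hass, Hid. auto.
        -- rewrite <- E at 1. rewrite Hass, (Hcom a b), Hass, Hid.
           rewrite (Hcom b a). auto.
    + assert (Hle1 : sl_le join a (join a b)) by (unfold sl_le; rewrite Hass, Hid; auto).
      assert (Hle2 : sl_le join b (join a b)).
      { unfold sl_le. rewrite (Hcom a b), Hass, Hid. auto. }
      split.
      * intros N. apply NNPP. intro N2. apply N.
        apply not_or_and in N2. destruct N2 as [N1 N3].
        apply NNPP in N1. apply NNPP in N3. apply M7; auto. discriminate.
      * intros [N|N] E; apply N; eapply M3; eauto; discriminate.
  - intros a bs Hne. split.
    + intros Hs p Hp. apply union_K_iff.
      apply NNPP. intro N.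
      assert (Hall : forall b, In b bs -> inE spec p b).
      { intros b Hb. apply NNPP. intro Nb. apply N. exists b. split; auto.
        apply (KF_phi join spec HM). auto. }
      destruct p as [y|[b0 l]].
      * destruct bs as [|b bs]; [congruence|]. apply (Hall b). simpl; auto.
      * simpl in Hp. apply Hp.
        apply (multicut join spec HM a (b0 :: l) bs []).
        -- intros b Hb. exact (Hall b Hb).
        -- intros z [].
        -- rewrite app_nil_r; auto.
        -- rewrite app_nil_r; auto.
    + intros Hsub. apply NNPP. intro N.
      destruct bs as [|b0 l]; [congruence|].
      destruct (proj1 (union_K_iff _ _ _ _) (Hsub (inr (b0, l)) N)) as (b & Hb & Hk).
      apply (KF_phi join spec HM) in Hk. apply Hk.
      exists b. split; auto.
Qed.
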